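(* Let $G$ be a finite Frobenius group with abelian Frobenius kernel $N$ and abelian Frobenius complement $H$. Then $$A_G(t)=\frac{1}{|G|}\left[\frac{1}{1-|G|t}+\frac{|N|-1}{1-|N|t}+\frac{|N|(|H|-1)}{1-|H|t}\right]$$ and $$B_G(t)=\frac{1}{1-t}\left[1+\frac{(|N|-1)t}{|H|(1-|N|t)}+\frac{(|H|-1)t}{1-|H|t}\right].$$
   Context: A finite group $G$ is a Frobenius group if it has a proper non-trivial subgroup $H$ (a Frobenius complement) such that $H\cap gHg^{-1}=\{1\}$ for all $g\in G\setminus H$; the Frobenius kernel is $N=\left(G\setminus\bigcup_{g\in G}gHg^{-1}\right)\cup\{1\}$, a normal subgroup with $G=N\rtimes H$. For a finite group $G$ and $n\ge0$, $G$ acts on $G^n$ by simultaneous conjugation; let $G^{(n)}\subseteq G^n$ be the set of $n$-tuples of pairwise commuting elements. Let $\alpha_{G,n}$ (resp. $\beta_{G,n}$) be the number of orbits on $G^n$ (resp. $G^{(n)}$), and $A_G(t)=\sum_{n\ge0}\alpha_{G,n}t^n$, $B_G(t)=\sum_{n\ge0}\beta_{G,n}t^n$. *)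

(* Defs.v *)
From mathcomp Require Import all_boot all_order all_algebra all_fingroup all_solvable.
Set Implicit Arguments. Unset Strict Implicit. Unset Printing Implicit Defensive.
Import GRing.Theory.

(* Formal power series over rat, represented by their coefficient sequence. *)
Definition fps := nat -> rat.

Definition fps_add (f g : fps) : fps := fun n => (f n + g n)%R.
Definition fps_scale (c : rat) (f : fps) : fps := fun n => (c * f n)%R.
Definition fps_mul (f g : fps) : fps :=
  fun n => (\sum_(i < n.+1) f i * g (n - i)%N)%R.
Definition fps_one : fps := fun n => if n is 0 then 1%R else 0%R.
Definition fps_t : fps := fun n => if n is 1 then 1%R else 0%R.
(* fps_inv_1m a = 1/(1 - a t), the formal inverse of 1 - a t, i.e. sum_n a^n t^n *)
Definition fps_inv_1m (a : rat) : fps := fun n => (a ^+ n)%R.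
Definition fps_1m (a : rat) : fps := fps_add fps_one (fps_scale (- a)%R fps_t).

Lemma fps_inv_1mP (a : rat) n :
  fps_mul (fps_1m a) (fps_inv_1m a) n = fps_one n.
Proof.
rewrite /fps_mul /fps_1m /fps_add /fps_scale /fps_one /fps_t /fps_inv_1m.
case: n => [|n]; first by rewrite big_ord1 /= mulr0 addr0 mul1r.
rewrite big_ord_recl /= subn0 !big_ord_recl /= subSS subn0.
rewrite big1 ?addr0; last by move=> i _; rewrite /= mulr0 addr0 mul0r.
by rewrite mulr0 addr0 mul1r add0r mulr1 exprS mulNr addrN.
Qed.

Local Open Scope group_scope.

Section Orbits.
Variable gT : finGroupType.

Definition tuples (G : {set gT}) (n : nat) : {set {ffun 'I_n -> gT}} :=
  [set x : {ffun 'I_n -> gT} | [forall i, x i \in G]].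

Definition ctuples (G : {set gT}) (n : nat) : {set {ffun 'I_n -> gT}} :=
  [set x in tuples G n | [forall i, forall j, x i * x j == x j * x i]].

Definition tconj n (x : {ffun 'I_n -> gT}) (g : gT) : {ffun 'I_n -> gT} :=
  [ffun i => x i ^ g].

Definition num_conj_orbits n (G : {set gT}) (S : {set {ffun 'I_n -> gT}}) : nat :=
  #|[set [set tconj x g | g in G] | x in S]|.

Definition alpha (G : {set gT}) n : nat := num_conj_orbits G (tuples G n).
Definition beta (G : {set gT}) n : nat := num_conj_orbits G (ctuples G n).

Definition A_G (G : {set gT}) : fps := fun n => ((alpha G n)%:R)%R.
Definition B_G (G : {set gT}) : fps := fun n => ((beta G n)%:R)%R.
End Orbits.

(* Main.v *)
Require Import Defs.
From mathcomp Require Import all_boot all_order all_algebra all_fingroup all_solvable.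
From mathcomp Require Import ring.
From Stdlib Require Import FunctionalExtensionality.
Import GRing.Theory.

Set Implicit Arguments. Unset Strict Implicit. Unset Printing Implicit Defensive.

Section Aux0.
Local Open Scope group_scope.

Lemma conj_fix_cent (gT : finGroupType) (x a : gT) : (x ^ a == x) = (x \in 'C[a]).
Proof.
by apply/eqP/cent1P => [/conjg_fixP/commgP|/commgP/conjg_fixP].
Qed.

Lemma tconj1 (gT : finGroupType) n : (@tconj gT n)^~ 1 =1 id.
Proof. by move=> x; apply/ffunP=> i; rewrite ffunE conjg1. Qed.

Lemma tconjM (gT : finGroupType) n x : act_morph (@tconj gT n) x.
Proof. by move=> a b; apply/ffunP=> i; rewrite !ffunE conjgM. Qed.

Definition tact (gT : finGroupType) n := TotalAction (@tconj1 gT n) (@tconjM gT n).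

Lemma num_orbitsE (gT : finGroupType) n (G : {group gT}) S :
  num_conj_orbits G S = #|orbit (tact gT n) G @: S|.
Proof. by []. Qed.

Lemma tuples_acts (gT : finGroupType) n (G : {group gT}) :
  [acts G, on tuples G n | tact gT n].
Proof.
apply/subsetP=> a Ga; rewrite !inE; apply/subsetP=> x; rewrite !inE /=.
move=> /forallP Hx; apply/forallP=> i; rewrite ffunE groupJ //.
Qed.

Lemma ctuples_acts (gT : finGroupType) n (G : {group gT}) :
  [acts G, on ctuples G n | tact gT n].
Proof.
apply/subsetP=> a Ga; rewrite !inE; apply/subsetP=> x; rewrite !inE /=.
case/andP=> /forallP Hx /forallP Hc; apply/andP; split.
  by apply/forallP=> i; rewrite ffunE groupJ.
apply/forallP=> i; apply/forallP=> j; rewrite !ffunE -!conjMg.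
by move/forallP: (Hc i) => /(_ j) /eqP ->.
Qed.

Lemma fix_tuples (gT : finGroupType) n (G : {group gT}) a :
  a \in G -> 'Fix_(tuples G n | tact gT n)[a] = tuples 'C_G[a] n.
Proof.
move=> Ga; apply/setP=> x; rewrite in_setI; apply/andP/idP.
  case; rewrite inE => /forallP Hx /afix1P /= /ffunP Hf.
  rewrite inE; apply/forallP=> i; rewrite inE Hx -conj_fix_cent.
  move: (Hf i); rewrite /tact /= ffunE => ->; exact: eqxx.
rewrite inE => /forallP Hx; split.
  by rewrite inE; apply/forallP=> i; have := Hx i; rewrite inE => /andP[].
apply/afix1P/ffunP=> i /=; rewrite ffunE; apply/eqP; rewrite conj_fix_cent.
by have := Hx i; rewrite inE => /andP[].
Qed.

Lemma fix_ctuples (gT : finGroupType) n (G : {group gT}) a :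
  a \in G -> 'Fix_(ctuples G n | tact gT n)[a] = ctuples 'C_G[a] n.
Proof.
move=> Ga; apply/setP=> x; rewrite in_setI.
move/setP: (fix_tuples n Ga) => /(_ x); rewrite in_setI => E.
rewrite [x \in ctuples _ _]inE [x \in ctuples 'C_G[a] _]inE -E.
by rewrite -!andbA; congr (_ && _); rewrite andbC.
Qed.

End Aux0.

Section Aux1.
Local Open Scope group_scope.

Lemma card_tuples (gT : finGroupType) (A : {set gT}) n : #|tuples A n| = (#|A| ^ n)%N.
Proof.
rewrite -[in RHS](card_ord n) -card_ffun_on; apply: eq_card => x.
rewrite inE; apply/forallP/ffun_onP => H i; exact: H.
Qed.

Lemma ctuples_abelian (gT : finGroupType) (A : {set gT}) n :
  abelian A -> ctuples A n = tuples A n.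
Proof.
move=> cAA; apply/setP=> x; rewrite inE; apply/andP/idP => [[]//|Hx]; split=> //.
move: Hx; rewrite inE => /forallP Hx.
apply/forallP=> i; apply/forallP=> j; apply/eqP.
exact: (centsP cAA) (Hx i) _ (Hx j).
Qed.

Lemma alpha_sum (gT : finGroupType) (G : {group gT}) n :
  (alpha G n * #|G| = \sum_(a in G) #|'C_G[a]| ^ n)%N.
Proof.
rewrite /alpha num_orbitsE -Frobenius_Cauchy ?tuples_acts //.
by apply: eq_bigr => a Ga; rewrite fix_tuples // card_tuples.
Qed.

Lemma beta_sum (gT : finGroupType) (G : {group gT}) n :
  (beta G n * #|G| = \sum_(a in G) #|ctuples 'C_G[a] n|)%N.
Proof.
rewrite /beta num_orbitsE -Frobenius_Cauchy ?ctuples_acts //.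
by apply: eq_bigr => a Ga; rewrite fix_ctuples.
Qed.

Definition consf (gT : finGroupType) n (a : gT) (y : {ffun 'I_n -> gT}) : {ffun 'I_n.+1 -> gT} :=
  [ffun i => if unlift ord0 i is Some j then y j else a].

Lemma consf0 (gT : finGroupType) n (a : gT) y : consf a y (@ord0 n) = a.
Proof. by rewrite ffunE unlift_none. Qed.

Lemma consfS (gT : finGroupType) n (a : gT) y (j : 'I_n) : consf a y (lift ord0 j) = y j.
Proof. by rewrite ffunE liftK. Qed.

Lemma consf_inj (gT : finGroupType) n (a : gT) : injective (@consf gT n a).
Proof.
move=> y y' E; apply/ffunP=> j; by rewrite -[y j](consfS a) -[y' j](consfS a) E.
Qed.

Definition fib (gT : finGroupType) (G : {set gT}) n (a : gT) :=
  [set x : {ffun 'I_n.+1 -> gT} | (x \in ctuples G n.+1) && (x ord0 == a)].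
Definition img (gT : finGroupType) (G : {set gT}) n (a : gT) :=
  [set @consf gT n a y | y in ctuples G n].

Lemma fiber_ctuples (gT : finGroupType) (G : {group gT}) n a : a \in G ->
  fib G n a = img 'C_G[a] n a.
Proof.
move=> Ga; apply/setP=> x; rewrite /fib /img; apply/idP/idP.
  rewrite !inE => /andP[/andP[/forallP Hx /forallP Hc] /eqP Hx0].
  have Ex : x = consf a [ffun j => x (lift ord0 j)].
    apply/ffunP=> i; case: (unliftP ord0 i) => [j ->|->].
      by rewrite consfS ffunE.
    by rewrite consf0.
  rewrite Ex; apply: imset_f; rewrite !inE; apply/andP; split.
    apply/forallP=> j; rewrite ffunE in_setI Hx /=; apply/cent1P; rewrite -Hx0.
    by move/forallP: (Hc (lift ord0 j)) => /(_ ord0) /eqP.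
  apply/forallP=> i; apply/forallP=> j; rewrite !ffunE.
  by move/forallP: (Hc (lift ord0 i)) => /(_ (lift ord0 j)).
case/imsetP=> y; rewrite !inE => /andP[/forallP Hy /forallP Hc] ->.
rewrite consf0 eqxx andbT; apply/andP; split.
  apply/forallP=> i; case: (unliftP ord0 i) => [j ->|->].
    by rewrite consfS; have := Hy j; rewrite !inE => /andP[].
  by rewrite consf0.
have Hya : forall j, y j * a == a * y j.
  by move=> j; have := Hy j; rewrite in_setI => /andP[_ /cent1P ->].
apply/forallP=> i; apply/forallP=> k.
case: (unliftP ord0 i) => [j ->|->]; case: (unliftP ord0 k) => [l ->|->];
  rewrite ?consfS ?consf0 //.
- by move/forallP: (Hc j) => /(_ l).
- by rewrite eq_sym.
Qed.

Lemma card_ctuplesS (gT : finGroupType) (G : {group gT}) n :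
  #|ctuples G n.+1| = (\sum_(a in G) #|ctuples 'C_G[a] n|)%N.
Proof.
rewrite -sum1_card (partition_big (fun x : {ffun 'I_n.+1 -> gT} => x ord0) (mem G)) /=.
  apply: eq_bigr => a Ga; rewrite -(card_imset (ctuples 'C_G[a] n) (@consf_inj gT n a)) -/(img _ n a) -fiber_ctuples //.
  rewrite -sum1_card; apply: eq_bigl => x; by rewrite /fib inE.
by move=> x; rewrite !inE => /andP[/forallP H _]; exact: H.
Qed.

End Aux1.

Section Aux2.
Local Open Scope group_scope.

Lemma split_sum (gT : finGroupType) (G N : {group gT}) (F : gT -> nat) : N \subset G ->
 (\sum_(a in G) F a = F 1%g + \sum_(a in N :\ 1%g) F a + \sum_(a in G :\: N) F a)%N.
Proof.
move=> sNG; rewrite (big_setID N) /= (setIidPr sNG) (big_setD1 1) ?group1 // addnA.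
Qed.

Lemma abelian_cent1 (gT : finGroupType) (G A : {group gT}) a :
  A \subset G -> abelian A -> a \in A -> A \subset 'C_G[a].
Proof.
move=> sAG cAA Aa; apply/subsetP=> x Ax; rewrite in_setI (subsetP sAG) //=.
by apply/cent1P; exact: (centsP cAA) x Ax a Aa.
Qed.

Lemma cent_ker (gT : finGroupType) (G N H : {group gT}) a :
  [Frobenius G = N ><| H] -> abelian N -> a \in N -> a != 1 -> 'C_G[a] = N.
Proof.
move=> frobG cNN Na a1.
have [defG _ _ _ _] := Frobenius_context frobG.
have [_ /mulG_sub[sNG _] _ _] := sdprodP defG.
apply/eqP; rewrite eqEsubset abelian_cent1 // andbT.
by apply: Frobenius_cent1_ker frobG _ _; rewrite !inE a1.
Qed.

Lemma cent_out (gT : finGroupType) (G N H : {group gT}) a :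
  [Frobenius G = N ><| H] -> abelian H -> a \in G -> a \notin N ->
  exists2 y, y \in G & 'C_G[a] = H :^ y.
Proof.
move=> frobG cHH Ga Na.
have [defG _ _ _ _] := Frobenius_context frobG.
have [_ /mulG_sub[sNG sHG] _ _] := sdprodP defG.
have /and3P[/eqP covG _ _] := Frobenius_partition frobG.
have : a \in cover (gval N |: (H^# :^: N)) by rewrite covG.
move=> /bigcupP[B]; case/setU1P=> [-> |]; first by rewrite (negPf Na).
case/imsetP=> y Ny -> aB.
have Gy : y \in G by rewrite (subsetP sNG).
exists y => //.
have tiH : normedTI H^# G H by case/andP: (FrobeniusWcompl frobG).
move: aB; rewrite mem_conjg => Hb.
have Ea : 'C[a] = 'C[(a ^ y^-1) ^ y] by rewrite conjgKV.
rewrite Ea cent1J -{1}(conjGid Gy) -conjIg; congr (_ :^ _).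
apply/eqP; rewrite eqEsubset (cent1_normedTI tiH) //=.
by apply: abelian_cent1 => //; move: Hb; rewrite in_setD1 => /andP[].
Qed.

Lemma sum_cent (gT : finGroupType) (G N H : {group gT}) (F : {set gT} -> nat) :
  [Frobenius G = N ><| H] -> abelian N -> abelian H ->
  (forall y, F (H :^ y) = F H) ->
  (\sum_(a in G) F 'C_G[a] = F G + (#|N| - 1) * F N + (#|G| - #|N|) * F H)%N.
Proof.
move=> frobG cNN cHH FJ.
have [defG _ _ _ _] := Frobenius_context frobG.
have [_ /mulG_sub[sNG sHG] _ _] := sdprodP defG.
rewrite (split_sum (fun a => F 'C_G[a]) sNG) cent11T setIT.
rewrite (eq_bigr (fun _ => F N)); last first.
  by move=> a; rewrite in_setD1 => /andP[a1 Na]; rewrite (cent_ker frobG).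
rewrite [X in (_ + _ + X)%N](eq_bigr (fun _ => F H)); last first.
  move=> a; rewrite in_setD => /andP[Na Ga].
  by have [y _ ->] := cent_out frobG cHH Ga Na.
rewrite !sum_nat_const [#|G :\: N|]cardsD (setIidPr sNG); congr (_ + (_ * _) + _)%N.
by rewrite [#|N|](cardsD1 1) group1 add1n subn1.
Qed.

Lemma alpha_nat (gT : finGroupType) (G N H : {group gT}) n :
  [Frobenius G = N ><| H] -> abelian N -> abelian H ->
  (alpha G n * #|G| = #|G| ^ n + (#|N| - 1) * #|N| ^ n + (#|G| - #|N|) * #|H| ^ n)%N.
Proof.
move=> frobG cNN cHH; rewrite alpha_sum.
rewrite (sum_cent (F := fun A => #|A| ^ n)%N frobG cNN cHH); last by move=> y; rewrite cardJg.
by [].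
Qed.

Lemma ctuples_nat (gT : finGroupType) (G N H : {group gT}) n :
  [Frobenius G = N ><| H] -> abelian N -> abelian H ->
  (#|ctuples G n.+1| = #|ctuples G n| + (#|N| - 1) * #|N| ^ n + (#|G| - #|N|) * #|H| ^ n)%N.
Proof.
move=> frobG cNN cHH; rewrite card_ctuplesS.
rewrite (sum_cent (F := fun A => #|ctuples A n|) frobG cNN cHH).
  by rewrite (ctuples_abelian n cNN) (ctuples_abelian n cHH) !card_tuples.
by move=> y; rewrite !ctuples_abelian ?abelianJ // !card_tuples cardJg.
Qed.

Lemma beta_nat (gT : finGroupType) (G : {group gT}) n :
  (beta G n * #|G| = #|ctuples G n.+1|)%N.
Proof. by rewrite beta_sum card_ctuplesS. Qed.

Lemma ctuples0 (gT : finGroupType) (G : {group gT}) : #|ctuples G 0| = 1%N.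
Proof.
have -> : ctuples G 0 = tuples G 0.
  apply/setP=> x; rewrite [in LHS]inE.
  have -> : [forall i : 'I_0, forall j : 'I_0, x i * x j == x j * x i] by apply/forallP=> -[].
  by rewrite andbT.
by rewrite card_tuples.
Qed.

End Aux2.

Section Aux3.
Local Open Scope ring_scope.

Lemma fps_mul_inv1 (F : fps) n :
  fps_mul (fps_inv_1m 1) F n.+1 = fps_mul (fps_inv_1m 1) F n + F n.+1.
Proof.
rewrite /fps_mul big_ord_recl /= subn0 /fps_inv_1m expr1n mul1r addrC.
by congr (_ + _); apply: eq_bigr => i _; rewrite /= !expr1n subSS.
Qed.

Lemma fps_mul_inv1_0 (F : fps) : fps_mul (fps_inv_1m 1) F 0 = F 0.
Proof. by rewrite /fps_mul big_ord1 /fps_inv_1m expr0 mul1r. Qed.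

Lemma fps_t_inv0 (a : rat) : fps_mul fps_t (fps_inv_1m a) 0 = 0.
Proof. by rewrite /fps_mul big_ord1 /fps_t mul0r. Qed.

Lemma fps_t_invS (a : rat) m : fps_mul fps_t (fps_inv_1m a) m.+1 = a ^+ m.
Proof.
rewrite /fps_mul big_ord_recl big_ord_recl /= /fps_t mul0r add0r mul1r subSS subn0.
rewrite big1 ?addr0 // => i _; by rewrite mul0r.
Qed.

End Aux3.

Unset Implicit Arguments.

Theorem corollary9p4 (gT : finGroupType) (G N H : {group gT}) :
  [Frobenius G = N ><| H]%g -> abelian N -> abelian H ->
  let g : rat := (#|G|%:R)%R in
  let k : rat := (#|N|%:R)%R in
  let h : rat := (#|H|%:R)%R in
  A_G G =
    fps_scale g^-1
      (fps_add (fps_inv_1m g)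
       (fps_add (fps_scale (k - 1) (fps_inv_1m k))
                (fps_scale (k * (h - 1)) (fps_inv_1m h))))
  /\
  B_G G =
    fps_mul (fps_inv_1m 1)
      (fps_add fps_one
       (fps_add (fps_scale ((k - 1) / h) (fps_mul fps_t (fps_inv_1m k)))
                (fps_scale (h - 1) (fps_mul fps_t (fps_inv_1m h))))).
Proof.
Local Open Scope ring_scope.
move=> frobG cNN cHH g k h.
have [defG _ _ _ _] := Frobenius_context frobG.
have cardG : #|G| = (#|N| * #|H|)%N by rewrite (sdprod_card defG).
have k0 : k != 0 by rewrite /k Num.Theory.pnatr_eq0 -lt0n cardG_gt0.
have h0 : h != 0 by rewrite /h Num.Theory.pnatr_eq0 -lt0n cardG_gt0.
have gkh : g = k * h by rewrite /g cardG natrM.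
have g0 : g != 0 by rewrite gkh mulf_neq0.
have E2 : (#|G| - #|N| = #|N| * (#|H| - 1))%N by rewrite cardG mulnBr muln1.
split; apply: functional_extensionality => n.
  rewrite /A_G /fps_scale /fps_add /fps_inv_1m.
  have E := alpha_nat n frobG cNN cHH.
  rewrite E2 in E; move/(congr1 (fun m => m%:R : rat)): E.
  rewrite !natrD !natrM !natrX !natrB ?cardG_gt0 // -/g -/k -/h => E.
  rewrite -[(alpha G n)%:R](mulfK g0) E; field; exact: g0.
have C : forall m, (#|ctuples G m|)%:R = k ^+ m + k * h ^+ m - k :> rat.
  elim=> [|m IH]; first by rewrite ctuples0 !expr0 mulr1 addrK.
  rewrite (ctuples_nat m frobG cNN cHH) E2 !natrD !natrM !natrX !natrB ?cardG_gt0 //.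
  rewrite -/k -/h IH !exprS; ring.
have R : forall m, fps_mul (fps_inv_1m 1)
      (fps_add fps_one
       (fps_add (fps_scale ((k - 1) / h) (fps_mul fps_t (fps_inv_1m k)))
                (fps_scale (h - 1) (fps_mul fps_t (fps_inv_1m h))))) m
      = (k ^+ m + h ^+ m.+1 - 1) / h.
  elim=> [|m IH]; [rewrite fps_mul_inv1_0 | rewrite fps_mul_inv1 IH];
    rewrite /fps_add /fps_one /fps_scale ?fps_t_inv0 ?fps_t_invS ?exprS /= ?expr0; field; exact: h0.
rewrite R /B_G.
have Eb := beta_nat G n; move/(congr1 (fun m => m%:R : rat)): Eb.
rewrite natrM C -/g => Eb.
rewrite -[(beta G n)%:R](mulfK g0) Eb gkh !exprS; field.
by rewrite h0 k0.
Qed.
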